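(* Let $N\ge1$, let $\mathcal{ZF}_N$ be as in the context, and let $\mathcal B_N$ be the quotient of the free $\Bbbk$-module on symbols $\bar b_0,\dots,\bar b_{N-1}$ by the submodule generated by $\bar b_i-\bar b_{N-1-i}$, $0\le i\le N-1$. Then the assignment $Z^{l,m,k}\mapsto\sum_{j=0}^k\binom kj\bar b_{l+j}$ extends to a well-defined isomorphism of $\Bbbk$-modules $\mathcal{ZF}_N\xrightarrow{\ \sim\ }\mathcal B_N$.
   Context: $\Bbbk$ is a commutative ring. $\mathcal F_N$ is the free $\Bbbk$-module on symbols $F^{l,m,k}$, $l,m,k\ge0$, $l+m+k+1=N$; $\mathcal{ZF}_N:=\mathcal F_N/I$ with $I$ generated by all $F^{l,m,k}-F^{m,l,k}$ and all $F^{l,m+1,k}+F^{l+1,m,k}-F^{l,m,k+1}$; $Z^{l,m,k}$ denotes the image of $F^{l,m,k}$. *)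

(* Defs.v *)
From HB Require Import structures.
From mathcomp Require Import all_boot all_order all_algebra.
Set Implicit Arguments. Unset Strict Implicit. Unset Printing Implicit Defensive.
Import GRing.Theory.
Local Open Scope ring_scope.

Definition Trip (N : nat) :=
  {t : 'I_N * 'I_N * 'I_N | (t.1.1 + t.1.2 + t.2 + 1 == N)%N}.
Definition tl N (t : Trip N) : nat := (val t).1.1.
Definition tm N (t : Trip N) : nat := (val t).1.2.
Definition tk N (t : Trip N) : nat := (val t).2.

Section Mods.
Variable R : comPzRingType.
Variable N : nat.

(* F_N : free R-module on the symbols F^{l,m,k}, l+m+k+1 = N. *)
Definition FN := {ffun Trip N -> R^o}.
(* the symbol F^{l,m,k} (zero if l+m+k+1 <> N, i.e. the symbol does not exist) *)
Definition Fsym (l m k : nat) : FN :=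
  [ffun t : Trip N => ((tl t == l) && (tm t == m) && (tk t == k))%:R].

Definition inI (x : FN) : Prop :=
  exists (c1 : Trip N -> R) (c2 : Trip N.-1 -> R),
    x = \sum_(t : Trip N) c1 t *: (Fsym (tl t) (tm t) (tk t) - Fsym (tm t) (tl t) (tk t))
      + \sum_(s : Trip N.-1)
          c2 s *: (Fsym (tl s) (tm s).+1 (tk s) + Fsym (tl s).+1 (tm s) (tk s)
                   - Fsym (tl s) (tm s) (tk s).+1).

Definition BF := {ffun 'I_N -> R^o}.
Definition bsym (i : nat) : BF := [ffun j : 'I_N => (val j == i)%:R].

Definition inJ (y : BF) : Prop :=
  exists c : 'I_N -> R, y = \sum_(i : 'I_N) c i *: (bsym i - bsym (N - 1 - i)%N).

Definition phi_sym (l k : nat) : BF :=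
  \sum_(j < k.+1) ('C(k, j))%:R *: bsym (l + j)%N.

Definition phi (x : FN) : BF := \sum_(t : Trip N) x t *: phi_sym (tl t) (tk t).

End Mods.

(* Main.v *)
Require Import Defs.
From HB Require Import structures.
From mathcomp Require Import all_boot all_order all_algebra zify ring.
Import GRing.Theory.
Local Open Scope ring_scope.

Lemma sum_ind (R : comPzRingType) (V : lmodType R) (I : finType) (t : I) (G : I -> V) :
  \sum_(s : I) (s == t)%:R *: G s = G t.
Proof.
rewrite (bigD1 t) //= eqxx scale1r big1 ?addr0 // => s /negbTE ->; by rewrite (_ : false%:R = 0 :> R) // scale0r.
Qed.

Lemma pascal (R : comPzRingType) (V : lmodType R) (f : nat -> V) l k :
  \sum_(j < k.+1) ('C(k, j))%:R *: f (l + j)%N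
  + \sum_(j < k.+1) ('C(k, j))%:R *: f (l.+1 + j)%N
  = \sum_(j < k.+2) ('C(k.+1, j))%:R *: f (l + j)%N.
Proof.
rewrite [RHS]big_ord_recl.
under [X in _ = _ + X]eq_bigr => i _ do rewrite lift0 binS natrD scalerDl.
rewrite big_split /= addrA; congr (_ + _); last first.
  by apply: eq_bigr => i _; rewrite addSnnS.
rewrite big_ord_recl [in RHS]big_ord_recr /= (bin_small (ltnSn k)) scale0r addr0 !bin0.
by congr (_ + _); apply: eq_bigr => i _; rewrite lift0 addnS.
Qed.

Section S.
Variable R : comPzRingType.
Variable N : nat.

Definition RelI (c1 : Trip N -> R) (c2 : Trip N.-1 -> R) : FN R N :=
  \sum_(t : Trip N) c1 t *: (Fsym R N (tl t) (tm t) (tk t) - Fsym R N (tm t) (tl t) (tk t))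
      + \sum_(s : Trip N.-1)
          c2 s *: (Fsym R N (tl s) (tm s).+1 (tk s) + Fsym R N (tl s).+1 (tm s) (tk s)
                   - Fsym R N (tl s) (tm s) (tk s).+1).

Lemma inIE x : @inI R N x <-> exists c1 c2, x = RelI c1 c2.
Proof. by []. Qed.

Lemma inI0 : @inI R N (0 : FN R N).
Proof.
exists (fun _ => 0), (fun _ => 0).
by rewrite !big1 ?addr0 // => *; rewrite scale0r.
Qed.

Lemma inID x y : @inI R N x -> @inI R N y -> @inI R N (x + y).
Proof.
move=> [c1 [c2 ->]] [d1 [d2 ->]].
exists (fun t => c1 t + d1 t), (fun t => c2 t + d2 t).
rewrite addrACA; congr (_ + _); rewrite -big_split /=; apply: eq_bigr => *;
  by rewrite scalerDl.
Qed.

Lemma inIZ a x : @inI R N x -> @inI R N (a *: x).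
Proof.
move=> [c1 [c2 ->]].
exists (fun t => a * c1 t), (fun t => a * c2 t).
rewrite scalerDr !scaler_sumr; congr (_ + _); apply: eq_bigr => *; by rewrite scalerA.
Qed.

Lemma inIN x : @inI R N x -> @inI R N (- x).
Proof. by move=> h; rewrite -scaleN1r; apply: inIZ. Qed.

Lemma inIB x y : @inI R N x -> @inI R N y -> @inI R N (x - y).
Proof. by move=> hx hy; apply: inID => //; apply: inIN. Qed.

Lemma inI_sum (I : finType) (F : I -> FN R N) : (forall i, @inI R N (F i)) -> @inI R N (\sum_i F i).
Proof. move=> h; apply: (big_ind (@inI R N)) => //; [exact: inI0 | exact: inID]. Qed.

Lemma inJ0 : @inJ R N (0 : BF R N).
Proof. exists (fun _ => 0); by rewrite big1 // => *; rewrite scale0r. Qed.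

Lemma inJD x y : @inJ R N x -> @inJ R N y -> @inJ R N (x + y).
Proof.
move=> [c ->] [d ->]; exists (fun t => c t + d t).
rewrite -big_split /=; apply: eq_bigr => *; by rewrite scalerDl.
Qed.

Lemma inJZ a x : @inJ R N x -> @inJ R N (a *: x).
Proof.
move=> [c ->]; exists (fun t => a * c t).
rewrite !scaler_sumr; apply: eq_bigr => *; by rewrite scalerA.
Qed.

Lemma inJN x : @inJ R N x -> @inJ R N (- x).
Proof. by move=> h; rewrite -scaleN1r; apply: inJZ. Qed.

Lemma inJB x y : @inJ R N x -> @inJ R N y -> @inJ R N (x - y).
Proof. by move=> hx hy; apply: inJD => //; apply: inJN. Qed.

Lemma inJ_sum (I : finType) (F : I -> BF R N) : (forall i, @inJ R N (F i)) -> @inJ R N (\sum_i F i).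
Proof. move=> h; apply: (big_ind (@inJ R N)) => //; [exact: inJ0 | exact: inJD]. Qed.

Lemma inJ_gen i : (i < N)%N -> @inJ R N (bsym R N i - bsym R N (N - 1 - i)).
Proof.
move=> hi; exists (fun j => (j == Ordinal hi)%:R).
by rewrite sum_ind.
Qed.

End S.

Lemma mkT1 N l m k : (l+m+k+1 == N)%N -> (l < N)%N. Proof. move/eqP; lia. Qed.
Lemma mkT2 N l m k : (l+m+k+1 == N)%N -> (m < N)%N. Proof. move/eqP; lia. Qed.
Lemma mkT3 N l m k : (l+m+k+1 == N)%N -> (k < N)%N. Proof. move/eqP; lia. Qed.
Definition mkT (N l m k : nat) (H : (l+m+k+1 == N)%N) : Trip N :=
  exist (fun t : 'I_N * 'I_N * 'I_N => (t.1.1 + t.1.2 + t.2 + 1 == N)%N)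
    ((Ordinal (@mkT1 N l m k H), Ordinal (@mkT2 N l m k H)), Ordinal (@mkT3 N l m k H)) H.

Lemma sum_ind' (R : comPzRingType) (I : finType) (f : I -> R) s :
  \sum_(t : I) f t * (s == t)%:R = f s.
Proof.
rewrite (bigD1 s) //= eqxx mulr1 big1 ?addr0 // => t; rewrite eq_sym => /negbTE ->.
by rewrite mulr0.
Qed.

Section S.
Variable R : comPzRingType.
Variable N : nat.

Lemma Fsym0 l m k : ~~ (l+m+k+1 == N)%N -> Fsym R N l m k = 0.
Proof.
move=> H; apply/ffunP => t; rewrite !ffunE.
case E: (_ && _ && _) => //.
move: E => /andP[/andP[/eqP ea /eqP eb] /eqP ec].
case: t ea eb ec => [[[a b] c] /= h]; rewrite /tl /tm /tk /= => ea eb ec.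
by rewrite -ea -eb -ec h in H.
Qed.

Lemma Fsym_eq (t s : Trip N) : Fsym R N (tl t) (tm t) (tk t) s = (s == t)%:R.
Proof.
rewrite ffunE. 
case: s t => [[[a b] c] hs] [[[a' b'] c'] ht].
by rewrite /tl /tm /tk /= -val_eqE /= !xpair_eqE.
Qed.

Lemma FN_exp (x : FN R N) : x = \sum_(t : Trip N) x t *: Fsym R N (tl t) (tm t) (tk t).
Proof.
apply/ffunP => s; rewrite sum_ffunE.
under eq_bigr => t _ do rewrite ffunE Fsym_eq.
by rewrite sum_ind'.
Qed.

Lemma bsym_eq (i j : 'I_N) : bsym R N i j = (j == i)%:R.
Proof. by rewrite ffunE. Qed.

Lemma BF_exp (y : BF R N) : y = \sum_(i : 'I_N) y i *: bsym R N i.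
Proof.
apply/ffunP => s; rewrite sum_ffunE.
under eq_bigr => t _ do rewrite ffunE bsym_eq.
by rewrite sum_ind'.
Qed.

Lemma phiD (x y : FN R N) : phi (x + y) = phi x + phi y.
Proof. rewrite /phi -big_split; apply: eq_bigr => t _; by rewrite ffunE scalerDl. Qed.
Lemma phiZ a (x : FN R N) : phi (a *: x) = a *: phi x.
Proof. rewrite /phi scaler_sumr; apply: eq_bigr => t _; by rewrite ffunE scalerA. Qed.
Lemma phi0 : phi (0 : FN R N) = 0.
Proof. by rewrite -(scale0r (0 : FN R N)) phiZ scale0r. Qed.
Lemma phiN (x : FN R N) : phi (- x) = - phi x.
Proof. by rewrite -scaleN1r phiZ scaleN1r. Qed.
Lemma phiB (x y : FN R N) : phi (x - y) = phi x - phi y.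
Proof. by rewrite phiD phiN. Qed.
Lemma phi_sum (I : finType) (F : I -> FN R N) : phi (\sum_i F i) = \sum_i phi (F i).
Proof. exact: (big_morph _ phiD phi0). Qed.

Lemma phi_Ft (t : Trip N) : phi (Fsym R N (tl t) (tm t) (tk t)) = phi_sym R N (tl t) (tk t).
Proof.
rewrite /phi; under eq_bigr => s _ do rewrite Fsym_eq.
exact: sum_ind.
Qed.

Lemma phi_F l m k : (l+m+k+1 == N)%N -> phi (Fsym R N l m k) = phi_sym R N l k.
Proof. move=> H; exact (phi_Ft (@mkT N l m k H)). Qed.

Definition psi (y : BF R N) : FN R N := \sum_(i : 'I_N) y i *: Fsym R N i (N.-1 - i) 0.

Lemma psiD (x y : BF R N) : psi (x + y) = psi x + psi y.
Proof. rewrite /psi -big_split; apply: eq_bigr => t _; by rewrite ffunE scalerDl. Qed.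
Lemma psiZ a (x : BF R N) : psi (a *: x) = a *: psi x.
Proof. rewrite /psi scaler_sumr; apply: eq_bigr => t _; by rewrite ffunE scalerA. Qed.
Lemma psi0 : psi (0 : BF R N) = 0.
Proof. by rewrite -(scale0r (0 : BF R N)) psiZ scale0r. Qed.
Lemma psiN (x : BF R N) : psi (- x) = - psi x.
Proof. by rewrite -scaleN1r psiZ scaleN1r. Qed.
Lemma psiB (x y : BF R N) : psi (x - y) = psi x - psi y.
Proof. by rewrite psiD psiN. Qed.
Lemma psi_sum (I : finType) (F : I -> BF R N) : psi (\sum_i F i) = \sum_i psi (F i).
Proof. exact: (big_morph _ psiD psi0). Qed.

Lemma psi_b n : (n < N)%N -> psi (bsym R N n) = Fsym R N n (N.-1 - n) 0.
Proof.
move=> hn; rewrite /psi.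
have -> : \sum_(i : 'I_N) bsym R N n i *: Fsym R N i (N.-1 - i) 0
   = \sum_(i : 'I_N) (i == Ordinal hn)%:R *: Fsym R N i (N.-1 - i) 0.
  by apply: eq_bigr => i _; rewrite ffunE.
by rewrite sum_ind.
Qed.

End S.

Lemma zid (R : comPzRingType) (a b c d e : R) : c - (d + e) = (a - d) + (b - e) - (a + b - c).
Proof. ring. Qed.

Section S.
Variable R : comPzRingType.
Variable N : nat.
Hypothesis hN : (1 <= N)%N.

Lemma zidF (a b c d e : FN R N) : c - (d + e) = (a - d) + (b - e) - (a + b - c).
Proof. apply/ffunP => t; rewrite !ffunE; exact: zid. Qed.

Lemma inI_g1 l m k : @inI R N (Fsym R N l m k - Fsym R N m l k).
Proof.
have [H|H] := boolP (l + m + k + 1 == N)%N.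
  exists (fun s => (s == @mkT N l m k H)%:R), (fun _ => 0).
  rewrite sum_ind big1 ?addr0 //; last by move=> *; rewrite scale0r.
have H' : ~~ (m + l + k + 1 == N)%N by rewrite (addnC m).
rewrite Fsym0 // Fsym0 // subr0; exact: inI0.
Qed.

Lemma inI_g2 l m k :
  @inI R N (Fsym R N l m.+1 k + Fsym R N l.+1 m k - Fsym R N l m k.+1).
Proof.
have [H|H] := boolP (l + m + k + 1 == N.-1)%N.
  exists (fun _ => 0), (fun s => (s == @mkT N.-1 l m k H)%:R).
  rewrite sum_ind big1 ?add0r //; last by move=> *; rewrite scale0r.
have H1 : ~~ (l + m.+1 + k + 1 == N)%N by apply/negP => /eqP e; move/negP: H; apply; apply/eqP; lia.
have H2 : ~~ (l.+1 + m + k + 1 == N)%N by apply/negP => /eqP e; move/negP: H; apply; apply/eqP; lia.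
have H3 : ~~ (l + m + k.+1 + 1 == N)%N by apply/negP => /eqP e; move/negP: H; apply; apply/eqP; lia.
rewrite Fsym0 // Fsym0 // Fsym0 // !addr0 subr0; exact: inI0.
Qed.

Definition Gf l k : FN R N :=
  \sum_(j < k.+1) ('C(k, j))%:R *: Fsym R N (l + j)%N (N.-1 - (l + j))%N 0.

Lemma lemA k : forall l m, (l + m + k + 1 = N)%N -> @inI R N (Fsym R N l m k - Gf l k).
Proof.
elim: k => [|k IH] l m H.
  rewrite /Gf big_ord1 /= addn0 scale1r (_ : (N.-1 - l)%N = m); last by lia.
  rewrite subrr; exact: inI0.
have -> : Gf l k.+1 = Gf l k + Gf l.+1 k.
  by rewrite /Gf (@pascal R _ (fun a => Fsym R N a (N.-1 - a) 0)).
rewrite (zidF (Fsym R N l m.+1 k) (Fsym R N l.+1 m k)).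
apply: inIB; last exact: inI_g2.
apply: inID; apply: IH; lia.
Qed.

Lemma psi_phi_sym l k : (l + k < N)%N -> psi R N (phi_sym R N l k) = Gf l k.
Proof.
move=> hlk; rewrite /phi_sym psi_sum /Gf; apply: eq_bigr => j _.
rewrite psiZ psi_b //.
have := ltn_ord j; lia.
Qed.

Lemma key (x : FN R N) : @inI R N (x - psi R N (phi x)).
Proof.
have -> : x - psi R N (phi x)
   = \sum_(t : Trip N) x t *: (Fsym R N (tl t) (tm t) (tk t) - Gf (tl t) (tk t)).
  rewrite {1}(FN_exp R N x) /phi psi_sum -sumrB; apply: eq_bigr => t _.
  rewrite psiZ psi_phi_sym ?scalerBr //.
  have := eqP (valP t); rewrite /tl /tk /=; lia.
apply: inI_sum => t; apply: inIZ; apply: lemA.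
exact: eqP (valP t).
Qed.

Lemma symJ l m k : (l + m + k + 1 = N)%N -> @inJ R N (phi_sym R N l k - phi_sym R N m k).
Proof.
move=> H.
have -> : phi_sym R N l k = \sum_(j < k.+1) ('C(k, j))%:R *: bsym R N (N - 1 - (m + j))%N.
  rewrite /phi_sym (reindex_inj rev_ord_inj) /=; apply: eq_bigr => j _.
  have hj := ltn_ord j.
  rewrite subSS bin_sub; last by lia.
  congr (_ *: bsym R N _); lia.
rewrite /phi_sym -opprB -sumrB; apply: inJN; apply: inJ_sum => j.
rewrite -scalerBr; apply: inJZ; apply: inJ_gen.
have := ltn_ord j; lia.
Qed.

Lemma part1 (x : FN R N) : @inI R N x -> @inJ R N (phi x).
Proof.
move=> [c1 [c2 ->]]; rewrite phiD !phi_sum; apply: inJD; apply: inJ_sum => t; rewrite phiZ;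
  apply: inJZ.
  have ht := eqP (valP t); rewrite phiB phi_Ft phi_F; last first.
    by apply/eqP; move: ht; rewrite /tl /tm /tk /=; lia.
  apply: symJ; exact: ht.
have ht := eqP (valP t).
move: ht; rewrite -/(tl t) -/(tm t) -/(tk t) => ht.
rewrite phiB phiD !phi_F; try (apply/eqP; lia).
rewrite /phi_sym pascal subrr; exact: inJ0.
Qed.

Lemma part2 (x : FN R N) : @inJ R N (phi x) -> @inI R N x.
Proof.
move=> hJ; rewrite -(subrK (psi R N (phi x)) x); apply: inID; first exact: key.
case: hJ => c ->; rewrite psi_sum; apply: inI_sum => i; rewrite psiZ; apply: inIZ.
have hi := ltn_ord i.
rewrite psiB !psi_b; try lia.
rewrite (_ : (N.-1 - (N - 1 - i))%N = i); last by lia.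
rewrite (_ : (N - 1 - i)%N = (N.-1 - i)%N); last by lia.
exact: inI_g1.
Qed.

Lemma part3 (y : BF R N) : exists x : FN R N, @inJ R N (y - phi x).
Proof.
have E : forall i : 'I_N, phi (Fsym R N i (N.-1 - i) 0) = bsym R N i.
  move=> i; rewrite phi_F; last by apply/eqP; have := ltn_ord i; lia.
  by rewrite /phi_sym big_ord1 addn0 scale1r.
exists (psi R N y).
rewrite /psi phi_sum; under eq_bigr => i _ do rewrite phiZ E.
rewrite -BF_exp subrr; exact: inJ0.
Qed.

End S.

Theorem mainTheorem4 (R : comPzRingType) (N : nat) (hN : (1 <= N)%N) :
  (forall x : FN R N, inI x -> inJ (phi x)) /\
  (forall x : FN R N, inJ (phi x) -> inI x) /\
  (forall y : BF R N, exists x : FN R N, inJ (y - phi x)).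
Proof.
split; first exact: part1.
split; first exact: part2.
exact: part3.
Qed.
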